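(* Let $G$ be a finite simple graph on the vertex set $V(G)=\{x_{11},\ldots,x_{n1}\}$ with no isolated vertex. Let $G_1,\ldots,G_n$ be connected finite simple graphs on vertex sets $V(G_i)=\{x_{i1},\ldots,x_{im_i}\}$ with $m_i\geq 2$ for every $i$, where the sets $V(G_i)\setminus\{x_{i1}\}$ are pairwise disjoint and disjoint from $V(G)$. Let $G(G_1,\ldots,G_n)$ be the graph obtained by attaching $G_i$ to $G$ at $x_{i1}$ for every $i$. Then $G(G_1,\ldots,G_n)$ is unmixed if and only if $G_i$ and $G_i\setminus\{x_{i1}\}$ are unmixed for every $i=1,\ldots,n$.
   Context: $G(G_1,\ldots,G_n)$ has vertex set $\bigcup_i V(G_i)$ and edge set $E(G)\cup\bigcup_i E(G_i)$. For a vertex $v$, $H\setminus\{v\}$ denotes the induced subgraph on $V(H)\setminus\{v\}$. A graph is unmixed if all its maximal independent sets have the same cardinality. *)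

(* Defs.v *)
From mathcomp Require Import all_boot.
Set Implicit Arguments. Unset Strict Implicit. Unset Printing Implicit Defensive.

Definition simple_graph (T : finType) (e : rel T) : Prop :=
  symmetric e /\ irreflexive e.

Definition graph_connected (T : finType) (e : rel T) : Prop :=
  forall x y : T, connect e x y.

Definition no_isolated_vertex (T : finType) (e : rel T) : Prop :=
  forall x : T, exists y : T, e x y.

Definition independent (T : finType) (e : rel T) (S : {set T}) : bool :=
  [forall x in S, forall y in S, ~~ e x y].

Definition maximal_independent_in (T : finType) (V : {set T}) (e : rel T)
    (S : {set T}) : bool :=
  [&& S \subset V, independent e S &
      [forall x in V :\: S, ~~ independent e (x |: S)]].

Definition unmixed_in (T : finType) (V : {set T}) (e : rel T) : Prop :=
  forall S1 S2 : {set T},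
    maximal_independent_in V e S1 -> maximal_independent_in V e S2 ->
    #|S1| = #|S2|.

Definition unmixed (T : finType) (e : rel T) : Prop := unmixed_in [set: T] e.

(* H \ {v}: the subgraph induced on V(H) \ {v}, expressed as unmixedness
   on the vertex set [set: T] minus v. *)
Definition unmixed_minus (T : finType) (e : rel T) (v : T) : Prop :=
  unmixed_in [set~ v] e.

(* Vertices of G(G_1,...,G_n): pairs (i, a) with a : 'I_(m i); the vertex
   (i, 0) is x_{i1} (a vertex of G), and (i, a) for a > 0 is x_{i,a+1}. *)
Definition attach (n : nat) (m : 'I_n -> nat) (G : rel 'I_n)
    (Gs : forall i : 'I_n, rel 'I_(m i)) : rel {i : 'I_n & 'I_(m i)} :=
  fun u v =>
    [&& val (tagged u) == 0, val (tagged v) == 0 & G (tag u) (tag v)]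
    || ((tag u == tag v) && Gs (tag u) (tagged u) (tagged_as u v)).

(* Main.v *)
Require Import Defs.
From mathcomp Require Import all_boot.
Set Implicit Arguments. Unset Strict Implicit. Unset Printing Implicit Defensive.

Lemma indepP (T : finType) (e : rel T) (S : {set T}) :
  reflect (forall x y, x \in S -> y \in S -> ~~ e x y) (independent e S).
Proof.
apply: (iffP forallP) => [H x y xS yS | H x].
  by have /implyP/(_ xS)/forallP/(_ y)/implyP/(_ yS) := H x.
by apply/implyP => xS; apply/forallP => y; apply/implyP => yS; apply: H.
Qed.

Lemma maxP (T : finType) (e : rel T) (V S : {set T}) :
  symmetric e -> irreflexive e ->
  maximal_independent_in V e S <->
  [/\ S \subset V, independent e S &
      forall x, x \in V -> x \notin S -> exists2 y, y \in S & e x y].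
Proof.
move=> sym irr; split.
  case/and3P => SV iS /forallP H; split => // x xV xS.
  have /implyP := H x; rewrite inE xS xV => /(_ isT) /indepP nI.
  case: (boolP [exists y in S, e x y]) => [/exists_inP[y yS exy]|nE]; first by exists y.
  exfalso; apply: nI => u v; move/exists_inP: nE => nE.
  rewrite !inE => /orP[/eqP->|uS] /orP[/eqP->|vS].
  - by rewrite irr.
  - by apply/negP => exv; apply: nE; exists v.
  - by apply/negP => euv; apply: nE; exists u; rewrite // sym.
  - by move/indepP: iS; apply.
case=> SV iS H; apply/and3P; split => //; apply/forallP => x.
apply/implyP; rewrite inE => /andP[xS xV]; have [y yS exy] := H x xV xS.
apply/indepP => /(_ x y); rewrite !inE eqxx yS orbT exy => /(_ isT isT).
by [].
Qed.

Lemma extend_max (T : finType) (e : rel T) (V S : {set T}) :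
  S \subset V -> independent e S ->
  exists2 S' : {set T}, S \subset S' & maximal_independent_in V e S'.
Proof.
move Hk : #|V :\: S| => k; elim: k S Hk => [|k IH] S Hk SV iS.
  exists S => //; apply/and3P; split => //; apply/forallP => x.
  by apply/implyP => xVS; move/eqP: Hk; rewrite cards_eq0 => /eqP Hk;
     rewrite Hk inE in xVS.
case: (boolP [forall x in V :\: S, ~~ independent e (x |: S)]) => H.
  by exists S => //; apply/and3P.
move: H; rewrite negb_forall => /existsP[x]; rewrite negb_imply negbK.
case/andP => xVS ixS; move: (xVS); rewrite inE => /andP[xS xV].
have [S' sS' mS'] : exists2 S' : {set T}, x |: S \subset S' & maximal_independent_in V e S'.
  apply: IH => //; last by rewrite subUset sub1set xV.
  have : V :\: S = x |: (V :\: (x |: S)).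
    by apply/setP => y; rewrite !inE; case: (eqVneq y x) => // ->; rewrite xS xV.
  move=> E; move: Hk; rewrite E cardsU1 !inE eqxx /= => /eqP; rewrite eqSS => /eqP.
  by [].
by exists S' => //; apply: subset_trans sS'; apply: subsetUr.
Qed.

Lemma connect_nb (T : finType) (e : rel T) x y :
  connect e x y -> x != y -> exists z, e x z.
Proof.
case/connectP => [[|z p]] /=; first by move=> _ ->; rewrite eqxx.
by case/andP => exz _ _ _; exists z.
Qed.

Unset Implicit Arguments.

Section Attach.
Variables (n : nat) (G : rel 'I_n) (m : 'I_n -> nat)
    (Gs : forall i : 'I_n, rel 'I_(m i))
    (x1 : forall i : 'I_n, 'I_(m i)).
Hypothesis hx1 : forall i : 'I_n, val (x1 i) = 0.
Hypothesis hG : simple_graph G.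
Hypothesis hGs : forall i, simple_graph (Gs i).

Local Notation V := {i : 'I_n & 'I_(m i)}.
Local Notation E := (attach G Gs).
Local Notation tg j a := (@Tagged _ j (fun k => 'I_(m k)) a).

Lemma tg_inj j : injective (fun a : 'I_(m j) => tg j a).
Proof.
move=> a b eab.
by have := congr1 (tagged_as (tg j a)) eab; rewrite !tagged_asE.
Qed.

Lemma EE j k a b : E (tg j a) (tg k b) =
  [&& val a == 0, val b == 0 & G j k] || ((j == k) && Gs j a (tagged_as (tg j a) (tg k b))).
Proof. by []. Qed.

Lemma Esame j a b : E (tg j a) (tg j b) = Gs j a b.
Proof.
rewrite EE eqxx /= tagged_asE.
case: (boolP (Gs j a b)); rewrite ?orbT // orbF => _.
by case: hG => _ irr; rewrite irr !andbF.
Qed.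

Lemma x1E j a : (val a == 0) = (a == x1 j).
Proof. by rewrite -(inj_eq val_inj) hx1. Qed.

Lemma E_sym : symmetric E.
Proof.
case=> j a [k b]; rewrite !EE; case: hG => sG _.
case: (eqVneq j k) => [ejk|ne]; first subst k; last by rewrite /= !orbF sG andbCA.
rewrite /= !tagged_asE; case: (hGs j) => sGj _; rewrite sGj.
by rewrite andbCA.
Qed.

Lemma E_irr : irreflexive E.
Proof. by case=> j a; rewrite Esame; case: (hGs j). Qed.

Definition fiber (S : {set V}) j : {set 'I_(m j)} := [set a | tg j a \in S].

Lemma fiberE S j a : (a \in fiber S j) = (tg j a \in S).
Proof. by rewrite inE. Qed.

Lemma card_fiber (S : {set V}) : #|S| = \sum_(j < n) #|fiber S j|.
Proof.
rewrite -sum1_card (partition_big (fun u : V => tag u) xpredT) //=.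
apply: eq_bigr => j _; rewrite sum1_card.
have -> : #|[pred u : V | (u \in S) && (tag u == j)]| = #|(fun a => tg j a) @: fiber S j|.
  apply: eq_card => -[k b]; rewrite !inE /=.
  apply/andP/imsetP => [[bS /eqP ekj]|[a aF eq]].
    by subst k; exists b; rewrite // fiberE.
  by case: eq => ekj; subst k => /= eq; rewrite (tg_inj j b a eq) -fiberE aF eqxx.
by rewrite card_imset //; apply: tg_inj.
Qed.

Lemma maxE S : maximal_independent_in setT E S <->
  [/\ S \subset setT, independent E S &
      forall x, x \in setT -> x \notin S -> exists2 y, y \in S & E x y].
Proof. exact: (maxP _ _ E_sym E_irr). Qed.

Lemma maxGs j (W S : {set 'I_(m j)}) : maximal_independent_in W (Gs j) S <->
  [/\ S \subset W, independent (Gs j) S &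
      forall x, x \in W -> x \notin S -> exists2 y, y \in S & Gs j x y].
Proof. by case: (hGs j) => s i; apply: maxP. Qed.

Lemma fiber_max S j : maximal_independent_in setT E S ->
  (x1 j \in fiber S j -> maximal_independent_in setT (Gs j) (fiber S j)) /\
  (x1 j \notin fiber S j -> maximal_independent_in [set~ x1 j] (Gs j) (fiber S j)).
Proof.
move/maxE => [_ iS dom].
have iF : independent (Gs j) (fiber S j).
  by apply/indepP => a b; rewrite !fiberE -Esame; move/indepP: iS; apply.
have domF a : a \notin fiber S j -> a != x1 j -> exists2 b, b \in fiber S j & Gs j a b.
  rewrite fiberE => aS ne; have [y yS ey] := dom (tg j a) (in_setT _) aS.
  case: y yS ey => k b yS; rewrite EE; case/orP => [/and3P[a0 _ _]| /andP[/eqP ejk g]].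
    by rewrite x1E (negbTE ne) in a0.
  by subst k; rewrite tagged_asE in g; exists b; rewrite ?fiberE.
split => xF; apply/maxGs; split => //.
- move=> a _ aF; apply: domF => //; apply/eqP => ea; by rewrite ea xF in aF.
- apply/subsetP => a aF; rewrite !inE; apply/eqP => ea; by rewrite -ea aF in xF.
- by move=> a; rewrite in_setC1 => ne aF; apply: domF.
Qed.

Definition glue (F : forall j, {set 'I_(m j)}) : {set V} := [set u : V | tagged u \in F (tag u)].

Lemma fiber_glue F j : fiber (glue F) j = F j.
Proof. by apply/setP => a; rewrite fiberE inE. Qed.

Lemma glue_max (F : forall j, {set 'I_(m j)}) :
  (forall j, independent (Gs j) (F j)) ->
  (forall j a, a \notin F j -> a != x1 j -> exists2 b, b \in F j & Gs j a b) ->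
  (forall j k, G j k -> x1 j \in F j -> x1 k \notin F k) ->
  (forall j, x1 j \notin F j ->
     (exists2 b, b \in F j & Gs j (x1 j) b) \/ (exists2 k, G j k & x1 k \in F k)) ->
  maximal_independent_in setT E (glue F).
Proof.
move=> C1 C2 C3 C4; apply/maxE; split; first exact: subsetT.
  apply/indepP => -[j a] [k b]; rewrite !inE /= => aF bF; rewrite EE; apply/negP.
  case/orP => [/and3P[a0 b0 Gjk]| /andP[/eqP ejk g]].
    rewrite !x1E in a0 b0; rewrite (eqP a0) in aF; rewrite (eqP b0) in bF.
    by move: (C3 j k Gjk aF); rewrite bF.
  subst k; rewrite tagged_asE in g.
  by move/indepP: (C1 j) => /(_ a b aF bF); rewrite g.
move=> -[j a] _; rewrite inE /= => aF.
case: (eqVneq a (x1 j)) => [ea|ne].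
  rewrite ea in aF; case: (C4 j aF) => [[b bF g]|[k Gjk xF]].
    by exists (tg j b); rewrite ?inE // Esame ea.
  exists (tg k (x1 k)); rewrite ?inE //.
  by rewrite EE; apply/orP; left; rewrite ea !x1E !eqxx Gjk.
have [b bF g] := C2 j a aF ne.
by exists (tg j b); rewrite ?inE // Esame.
Qed.


Lemma card_glue F : #|glue F| = \sum_(j < n) #|F j|.
Proof. by rewrite card_fiber; apply: eq_bigr => j _; rewrite fiber_glue. Qed.

Lemma eq_at i F F' : unmixed E ->
  maximal_independent_in setT E (glue F) -> maximal_independent_in setT E (glue F') ->
  (forall j, j != i -> F j = F' j) -> #|F i| = #|F' i|.
Proof.
move=> H m1 m2 eqF; have := H _ _ m1 m2; rewrite !card_glue.
rewrite (bigD1 i) //= [X in _ = X](bigD1 i) //=.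
rewrite (eq_bigr (fun j => #|F' j|)); last by move=> j /eqF ->.
by move/eqP; rewrite eqn_add2r => /eqP.
Qed.

Definition put i (A : {set 'I_(m i)}) j : {set 'I_(m j)} :=
  fiber ((fun a => tg i a) @: A) j.

Lemma put_i i A : put i A i = A.
Proof. by apply/setP => a; rewrite fiberE mem_imset //; apply: tg_inj. Qed.

Lemma nbx j : graph_connected (Gs j) -> 2 <= m j -> exists y, Gs j (x1 j) y.
Proof.
move=> c h; pose y : 'I_(m j) := Ordinal h.
apply: (connect_nb (c (x1 j) y)).
by rewrite -(inj_eq val_inj) hx1.
Qed.

Definition Tprop j (T : {set 'I_(m j)}) :=
  [&& maximal_independent_in [set~ x1 j] (Gs j) T,
      maximal_independent_in setT (Gs j) T & [exists y in T, Gs j (x1 j) y]].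

Lemma Texists j : (exists y, Gs j (x1 j) y) -> exists T, Tprop j T.
Proof.
case=> y g; case: (hGs j) => sj ij.
have yx : y \in [set~ x1 j].
  by rewrite in_setC1; apply/eqP => ey; rewrite ey ij in g.
have s1 : [set y] \subset [set~ x1 j] by rewrite sub1set.
have i1 : independent (Gs j) [set y].
  by apply/indepP => a b; rewrite !inE => /eqP-> /eqP->; rewrite ij.
have [T sT mT] := extend_max s1 i1.
have yT : y \in T by apply: (subsetP sT); rewrite inE.
exists T; apply/and3P; split => //; last by apply/exists_inP; exists y.
move/maxGs: mT => [_ iT dT]; apply/maxGs; split => //.
move=> x _ xT; case: (eqVneq x (x1 j)) => [->|ne]; first by exists y.
by apply: dT => //; rewrite in_setC1.
Qed.

Lemma Uexists j : exists U, maximal_independent_in setT (Gs j) U && (x1 j \in U).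
Proof.
case: (hGs j) => sj ij.
have i1 : independent (Gs j) [set x1 j].
  by apply/indepP => a b; rewrite !inE => /eqP-> /eqP->; rewrite ij.
have [U sU mU] := extend_max (subsetT _) i1.
by exists U; rewrite mU /=; apply: (subsetP sU); rewrite inE.
Qed.


Hypothesis hGiso : no_isolated_vertex G.
Hypothesis hm : forall i, 2 <= m i.
Hypothesis hGc : forall i, graph_connected (Gs i).

Definition Tf j : {set 'I_(m j)} := odflt set0 [pick T | Tprop j T].
Definition Uf j : {set 'I_(m j)} :=
  odflt set0 [pick U | maximal_independent_in setT (Gs j) U && (x1 j \in U)].

Lemma TP j : Tprop j (Tf j).
Proof.
rewrite /Tf; case: pickP => [T' -> //|none].
by have [T' ] := Texists j (nbx j (hGc j) (hm j)); rewrite none.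
Qed.

Lemma UP j : maximal_independent_in setT (Gs j) (Uf j) && (x1 j \in Uf j).
Proof.
rewrite /Uf; case: pickP => [T' -> //|none].
by have [T' ] := Uexists j; rewrite none.
Qed.

Lemma T_min j : maximal_independent_in [set~ x1 j] (Gs j) (Tf j).
Proof. by case/and3P: (TP j). Qed.
Lemma T_maxT j : maximal_independent_in setT (Gs j) (Tf j).
Proof. by case/and3P: (TP j). Qed.
Lemma T_nb j : exists2 b, b \in Tf j & Gs j (x1 j) b.
Proof. by case/and3P: (TP j) => _ _ /exists_inP. Qed.
Lemma T_indep j : independent (Gs j) (Tf j).
Proof. by case/maxGs: (T_min j). Qed.
Lemma T_nx j : x1 j \notin Tf j.
Proof.
case/maxGs: (T_min j) => /subsetP s _ _; apply/negP => /s.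
by rewrite in_setC1 eqxx.
Qed.
Lemma T_dom j a : a \notin Tf j -> exists2 b, b \in Tf j & Gs j a b.
Proof. by case/maxGs: (T_maxT j) => _ _ d aT; apply: d. Qed.
Lemma U_x j : x1 j \in Uf j.
Proof. by case/andP: (UP j). Qed.
Lemma U_indep j : independent (Gs j) (Uf j).
Proof. by case/andP: (UP j) => /maxGs[]. Qed.
Lemma U_dom j a : a \notin Uf j -> exists2 b, b \in Uf j & Gs j a b.
Proof. by case/andP: (UP j) => /maxGs[_ _ d] _ aT; apply: d. Qed.

Lemma case1 i A : maximal_independent_in setT (Gs i) A ->
  maximal_independent_in setT E (glue (fun j => if j == i then put i A j else Tf j)).
Proof.
move/maxGs=> [_ iA dA]; case: hG => sG irrG.
apply: glue_max => [j|j a|j k Gjk|j]; case: (eqVneq j i) => [eji|ne];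
  try (subst j; rewrite put_i); rewrite /=.
- exact: iA.
- exact: T_indep.
- by move=> aA _; apply: dA.
- by move=> aT _; apply: T_dom.
- move=> _; case: (eqVneq k i) => [eki|nk]; first by subst k; rewrite irrG in Gjk.
  exact: T_nx.
- by rewrite (negbTE (T_nx j)).
- by move=> xA; left; apply: dA.
- by move=> _; left; apply: T_nb.
Qed.

Lemma case2 i k A : G i k -> maximal_independent_in [set~ x1 i] (Gs i) A ->
  maximal_independent_in setT E
    (glue (fun j => if j == i then put i A j else if j == k then Uf j else Tf j)).
Proof.
move=> Gik /maxGs[sA iA dA]; case: hG => sG irrG.
have ki : k != i by apply/eqP => eki; rewrite eki irrG in Gik.
have xA : x1 i \notin A by apply/negP => /(subsetP sA); rewrite in_setC1 eqxx.
apply: glue_max => [j|j a|j k' Gjk|j]; case: (eqVneq j i) => [eji|ne];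
  try (subst j; rewrite put_i); rewrite /=.
- exact: iA.
- by case: (eqVneq j k) => _; [apply: U_indep | apply: T_indep].
- by move=> aA ax; apply: dA; rewrite // in_setC1.
- by case: (eqVneq j k) => _ aT _; [apply: U_dom | apply: T_dom].
- by rewrite (negbTE xA).
- case: (eqVneq j k) => [ejk|njk]; last by rewrite (negbTE (T_nx j)).
  subst j => _; case: (eqVneq k' i) => [eki|nk]; first by subst k'; rewrite /= put_i.
  case: (eqVneq k' k) => [ekk|nkk]; first by subst k'; rewrite irrG in Gjk.
  exact: T_nx.
- by move=> _; right; exists k => //; rewrite (negbTE ki) eqxx; apply: U_x.
- case: (eqVneq j k) => [ejk|njk]; first by subst j; rewrite U_x.
  by move=> _; left; apply: T_nb.
Qed.

Lemma main : unmixed E <-> forall i, unmixed (Gs i) /\ unmixed_minus (Gs i) (x1 i).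
Proof.
split => [H i | H].
  split.
    move=> A B mA mB.
    have := eq_at i _ _ H (case1 _ _ mA) (case1 _ _ mB).
    rewrite /= eqxx !put_i; apply => j /negbTE ->; by [].
  move=> A B mA mB; have [k Gik] := hGiso i.
  have := eq_at i _ _ H (case2 _ _ _ Gik mA) (case2 _ _ _ Gik mB).
  rewrite /= eqxx !put_i; apply => j /negbTE ->; by [].
move=> S1 S2 m1 m2; rewrite !card_fiber; apply: eq_bigr => j _.
have [a1 b1] := fiber_max S1 j m1; have [a2 b2] := fiber_max S2 j m2.
have [u um] := H j.
case: (boolP (x1 j \in fiber S1 j)) => h1; case: (boolP (x1 j \in fiber S2 j)) => h2.
- exact: u (a1 h1) (a2 h2).
- exact: etrans (u _ _ (a1 h1) (T_maxT j)) (esym (um _ _ (b2 h2) (T_min j))).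
- exact: etrans (um _ _ (b1 h1) (T_min j)) (esym (u _ _ (a2 h2) (T_maxT j))).
- exact: um (b1 h1) (b2 h2).
Qed.

End Attach.

Theorem proposition3p2 (n : nat) (G : rel 'I_n) (m : 'I_n -> nat)
    (Gs : forall i : 'I_n, rel 'I_(m i))
    (x1 : forall i : 'I_n, 'I_(m i))
    (hx1 : forall i, val (x1 i) = 0)
    (hG : simple_graph G) (hGiso : no_isolated_vertex G)
    (hm : forall i, 2 <= m i)
    (hGs : forall i, simple_graph (Gs i))
    (hGc : forall i, graph_connected (Gs i)) :
  unmixed (attach G Gs) <->
  (forall i : 'I_n, unmixed (Gs i) /\ unmixed_minus (Gs i) (x1 i)).
Proof. by apply: main. Qed.
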